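(* Let $p\in(1,\infty)$ and let $Y$ be a Banach space admitting an equivalent norm with $(\beta)$-modulus of power type $p$. Then there is a constant $C=C(Y)>0$ such that for every integer $h\ge2$, $$c_Y(T^\omega_h)\ge C\,\log(h)^{1/p}.$$
   Context: For a Banach space $X$ with closed unit ball $B_X$ and a sequence $(y_n)_{n\ge1}$ in $X$, let $\mathrm{sep}[(y_n)]:=\inf\{\|y_m-y_n\|: m\neq n\}$. The $(\beta)$-modulus of a norm is $$\overline{\beta}_X(t):=1-\sup\Big\{\inf_{n\ge1}\tfrac{\|x+y_n\|}{2}\ :\ x\in B_X,\ (y_n)_{n\ge1}\subset B_X,\ \mathrm{sep}[(y_n)]\ge t\Big\},$$ and the norm has $(\beta)$-modulus of power type $p$ if there is $c>0$ with $\overline{\beta}_X(t)\ge ct^p$ for all $t\in(0,2]$. For a positive integer $h$, $T^\omega_h$ is the complete countably branching rooted tree of height $h$: every vertex at distance $<h$ from the root has countably infinitely many children, and vertices at distance $h$ from the root are leaves; it carries the unweighted shortest-path metric. The distortion of an injective map $f\colon (M,d_M)\to(N,d_N)$ is $\mathrm{dist}(f)=\mathrm{Lip}(f)\mathrm{Lip}(f^{-1})$, and $c_Y(M):=\inf\{\mathrm{dist}(f): f\colon M\to Y\text{ injective}\}$ (which is $+\infty$ if no bi-Lipschitz embedding exists). *)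

(* Defs.v *)
From Stdlib Require Import Reals Lra List.
Open Scope R_scope.

Record NormedSpace := {
  V :> Type;
  vadd : V -> V -> V;
  vscal : R -> V -> V;
  vzero : V;
  vopp : V -> V;
  vnorm : V -> R;
  vadd_comm : forall x y, vadd x y = vadd y x;
  vadd_assoc : forall x y z, vadd x (vadd y z) = vadd (vadd x y) z;
  vadd_0 : forall x, vadd x vzero = x;
  vadd_opp : forall x, vadd x (vopp x) = vzero;
  vscal_1 : forall x, vscal 1 x = x;
  vscal_assoc : forall a b x, vscal a (vscal b x) = vscal (a * b) x;
  vscal_distr_v : forall a x y, vscal a (vadd x y) = vadd (vscal a x) (vscal a y);
  vscal_distr_s : forall a b x, vscal (a + b) x = vadd (vscal a x) (vscal b x);
  vnorm_nonneg : forall x, 0 <= vnorm x;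
  vnorm_def : forall x, vnorm x = 0 -> x = vzero;
  vnorm_scal : forall a x, vnorm (vscal a x) = Rabs a * vnorm x;
  vnorm_triangle : forall x y, vnorm (vadd x y) <= vnorm x + vnorm y
}.

Arguments vadd {_}. Arguments vscal {_}. Arguments vzero {_}.
Arguments vopp {_}. Arguments vnorm {_}.

Definition vsub {X : NormedSpace} (x y : X) : X := vadd x (vopp y).

Definition is_Banach (X : NormedSpace) : Prop :=
  forall u : nat -> X,
    (forall eps, 0 < eps -> exists N, forall m n, (N <= m)%nat -> (N <= n)%nat ->
        vnorm (vsub (u m) (u n)) < eps) ->
    exists l : X, forall eps, 0 < eps -> exists N, forall n, (N <= n)%nat ->
        vnorm (vsub (u n) l) < eps.

Definition is_norm (X : NormedSpace) (nrm : X -> R) : Prop :=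
  (forall x, 0 <= nrm x) /\
  (forall x, nrm x = 0 -> x = vzero) /\
  (forall a x, nrm (vscal a x) = Rabs a * nrm x) /\
  (forall x y, nrm (vadd x y) <= nrm x + nrm y).

Definition equivalent_norm (X : NormedSpace) (nrm : X -> R) : Prop :=
  is_norm X nrm /\
  exists a b, 0 < a /\ 0 < b /\
    forall x, a * vnorm x <= nrm x /\ nrm x <= b * vnorm x.

Definition sep_ge (X : NormedSpace) (nrm : X -> R) (y : nat -> X) (t : R) : Prop :=
  forall m n, m <> n -> t <= nrm (vsub (y m) (y n)).

(** [inf_{n>=1} nrm (x + y_n) / 2 <= s]  (indices are shifted to start at 0). *)
Definition inf_half_le (X : NormedSpace) (nrm : X -> R) (x : X) (y : nat -> X) (s : R) : Prop :=
  forall eps, 0 < eps -> exists n, nrm (vadd x (y n)) / 2 < s + eps.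

(** [sup { inf_n nrm(x+y_n)/2 : x, y_n in B, sep >= t } <= s]
    (with the convention sup of the empty set = -infinity). *)
Definition beta_sup_le (X : NormedSpace) (nrm : X -> R) (t s : R) : Prop :=
  forall (x : X) (y : nat -> X),
    nrm x <= 1 -> (forall n, nrm (y n) <= 1) -> sep_ge X nrm y t ->
    inf_half_le X nrm x y s.

(** [beta_bar(t) >= c t^p] for all [t] in (0,2], i.e.
    [sup {...} <= 1 - c t^p]. *)
Definition beta_power_type (X : NormedSpace) (nrm : X -> R) (p : R) : Prop :=
  exists c, 0 < c /\
    forall t, 0 < t -> t <= 2 -> beta_sup_le X nrm t (1 - c * Rpower t p).

(** Vertices: finite sequences of naturals of length <= h (root = nil);
    the children of [u] are [u ++ [k]], k : nat. *)
Definition tree_vertex (h : nat) (u : list nat) : Prop := (length u <= h)%nat.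

Definition tree_edge (u v : list nat) : Prop :=
  (exists k, v = u ++ k :: nil) \/ (exists k, u = v ++ k :: nil).

Inductive tree_walk (h : nat) : list nat -> list nat -> nat -> Prop :=
  | tw_refl : forall u, tree_vertex h u -> tree_walk h u u 0
  | tw_step : forall u w v n, tree_vertex h u -> tree_edge u w ->
      tree_walk h w v n -> tree_walk h u v (S n).

Definition tree_dist (h : nat) (u v : list nat) (d : nat) : Prop :=
  tree_walk h u v d /\ forall n, tree_walk h u v n -> (d <= n)%nat.

Definition tree_lip (Y : NormedSpace) (h : nat) (f : list nat -> Y) (a : R) : Prop :=
  forall u v d, tree_vertex h u -> tree_vertex h v -> tree_dist h u v d ->
    vnorm (vsub (f u) (f v)) <= a * INR d.

Definition tree_colip (Y : NormedSpace) (h : nat) (f : list nat -> Y) (b : R) : Prop :=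
  forall u v d, tree_vertex h u -> tree_vertex h v -> tree_dist h u v d ->
    INR d <= b * vnorm (vsub (f u) (f v)).

Definition tree_injective (Y : NormedSpace) (h : nat) (f : list nat -> Y) : Prop :=
  forall u v, tree_vertex h u -> tree_vertex h v -> f u = f v -> u = v.

(** [c_Y(T^omega_h) >= K]: every injective [f] has [Lip(f) Lip(f^{-1}) >= K]
    (with Lip = +infinity if no finite constant works). *)
Definition tree_distortion_ge (Y : NormedSpace) (h : nat) (K : R) : Prop :=
  forall f : list nat -> Y, tree_injective Y h f ->
    forall a b, 0 <= a -> 0 <= b -> tree_lip Y h f a -> tree_colip Y h f b ->
      K <= a * b.

(* Main.v *)
Require Import Defs.
From Stdlib Require Import Reals Lra Lia List Classical IndefiniteDescription.
Open Scope R_scope.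

Lemma opp_unique (X : NormedSpace) (a b : X) : vadd a b = vzero -> b = vopp a.
Proof.
  intro H. rewrite <- (vadd_0 X b). rewrite <- (vadd_opp X a).
  rewrite (vadd_assoc X b a). rewrite (vadd_comm X b a), H.
  rewrite vadd_comm, vadd_0. reflexivity.
Qed.

Lemma idem_zero (X : NormedSpace) (z : X) : vadd z z = z -> z = vzero.
Proof.
  intro Hz. transitivity (vadd (vadd z z) (vopp z)).
  - rewrite <- vadd_assoc, vadd_opp, vadd_0. reflexivity.
  - rewrite Hz, vadd_opp. reflexivity.
Qed.

Lemma scal_zero (X : NormedSpace) r : vscal r (@vzero X) = vzero.
Proof. apply idem_zero. rewrite <- vscal_distr_v, vadd_0. reflexivity. Qed.

Lemma opp_scal (X : NormedSpace) r (v : X) : vopp (vscal r v) = vscal r (vopp v).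
Proof. symmetry; apply opp_unique. rewrite <- vscal_distr_v, vadd_opp, scal_zero. reflexivity. Qed.

Lemma opp_add (X : NormedSpace) (a b : X) : vopp (vadd a b) = vadd (vopp a) (vopp b).
Proof.
  symmetry; apply opp_unique. rewrite vadd_assoc. rewrite (vadd_comm X a b).
  rewrite <- (vadd_assoc X b a). rewrite vadd_opp, vadd_0, vadd_opp. reflexivity.
Qed.

Lemma opp_opp (X : NormedSpace) (a : X) : vopp (vopp a) = a.
Proof. symmetry; apply opp_unique; rewrite vadd_comm; apply vadd_opp. Qed.

Lemma opp_m1 (X : NormedSpace) (z : X) : vopp z = vscal (-1) z.
Proof.
  symmetry; apply opp_unique. rewrite <- (vscal_1 X z) at 1.
  rewrite <- vscal_distr_s. replace (1 + -1) with 0 by ring.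
  apply idem_zero. rewrite <- vscal_distr_s. rewrite Rplus_0_r. reflexivity.
Qed.

Lemma I1 (X : NormedSpace) (a u v : X) : vadd (vsub a u) (vsub u v) = vsub a v.
Proof.
  unfold vsub. rewrite <- vadd_assoc. rewrite (vadd_assoc X (vopp u) u).
  rewrite (vadd_comm X (vopp u) u), vadd_opp. rewrite (vadd_comm X vzero), vadd_0.
  reflexivity.
Qed.

Lemma I2 (X : NormedSpace) (u m n : X) : vsub (vsub u m) (vsub u n) = vsub n m.
Proof.
  unfold vsub. rewrite opp_add, opp_opp.
  rewrite (vadd_comm X (vopp u) n). rewrite (vadd_comm X u (vopp m)).
  rewrite <- vadd_assoc. rewrite (vadd_comm X n (vopp u)).
  rewrite (vadd_assoc X u (vopp u) n), vadd_opp, (vadd_comm X vzero n), vadd_0.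
  apply vadd_comm.
Qed.

Lemma I3 (X : NormedSpace) r (x y : X) : vsub (vscal r x) (vscal r y) = vscal r (vsub x y).
Proof. unfold vsub. rewrite opp_scal, vscal_distr_v. reflexivity. Qed.

Lemma nrm_opp (X : NormedSpace) nrm (z : X) : is_norm X nrm -> nrm (vopp z) = nrm z.
Proof.
  intros [_ [_ [Hs _]]]. rewrite opp_m1, Hs. replace (Rabs (-1)) with 1 by (rewrite Rabs_left; lra). ring.
Qed.

Fixpoint lcp (x y : list nat) : nat :=
  match x, y with
  | a :: x', b :: y' => if Nat.eq_dec a b then S (lcp x' y') else 0%nat
  | _, _ => 0%nat
  end.

Lemma lcp_app_le x k y : (lcp (x ++ k :: nil) y <= S (lcp x y))%nat.
Proof.
  revert y; induction x as [|a x IH]; intros y; destruct y as [|b y]; simpl; try lia.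
  - destruct (Nat.eq_dec k b); simpl; lia.
  - destruct (Nat.eq_dec a b); try lia. specialize (IH y). lia.
Qed.

Lemma lcp_app_ge x k y : (lcp x y <= lcp (x ++ k :: nil) y)%nat.
Proof.
  revert y; induction x as [|a x IH]; intros y; destruct y as [|b y]; simpl; try lia.
  destruct (Nat.eq_dec a b); try lia. specialize (IH y). lia.
Qed.

Lemma lcp_refl y : lcp y y = length y.
Proof. induction y as [|a y IH]; simpl; auto. destruct (Nat.eq_dec a a); congruence. Qed.

Lemma lcp_common u l1 l2 : lcp (u ++ l1) (u ++ l2) = (length u + lcp l1 l2)%nat.
Proof. induction u as [|a u IH]; simpl; auto. destruct (Nat.eq_dec a a); congruence. Qed.

Lemma lcp_diff n m s1 s2 : n <> m -> lcp (n :: s1) (m :: s2) = 0%nat.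
Proof. intro H. simpl. destruct (Nat.eq_dec n m); congruence. Qed.

Lemma walk_lower h x y n : tree_walk h x y n -> (length x + length y <= n + 2 * lcp x y)%nat.
Proof.
  induction 1 as [u Hu | u w v n Hu He Hw IH].
  - rewrite lcp_refl. lia.
  - destruct He as [[k Hk]|[k Hk]]; subst.
    + rewrite length_app in IH. simpl in IH. pose proof (lcp_app_le u k v). lia.
    + rewrite length_app. simpl. pose proof (lcp_app_ge w k v). lia.
Qed.

Lemma walk_end h x y n : tree_walk h x y n -> tree_vertex h y.
Proof. induction 1; auto. Qed.

Lemma walk_start h x y n : tree_walk h x y n -> tree_vertex h x.
Proof. destruct 1; auto. Qed.

Lemma walk_app h x y z n m : tree_walk h x y n -> tree_walk h y z m -> tree_walk h x z (n + m).
Proof.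
  induction 1; intros; simpl; auto. eapply tw_step; eauto.
Qed.

Lemma walk_sym h x y n : tree_walk h x y n -> tree_walk h y x n.
Proof.
  induction 1 as [u Hu | u w v n Hu He Hw IH].
  - constructor; auto.
  - replace (S n) with (n + 1)%nat by lia. eapply walk_app; eauto.
    apply tw_step with (w := u). eapply walk_start; eauto.
    destruct He as [[k Hk]|[k Hk]]; [right|left]; exists k; auto.
    constructor; auto.
Qed.

Lemma walk_down h s : forall u, tree_vertex h (u ++ s) -> tree_walk h u (u ++ s) (length s).
Proof.
  induction s as [|k s IH]; intros u Hv.
  - rewrite app_nil_r in *. simpl. constructor; auto.
  - simpl. apply tw_step with (w := u ++ k :: nil).
    + unfold tree_vertex in *. rewrite length_app in Hv. lia.
    + left; exists k; auto.
    + replace (u ++ k :: s) with ((u ++ k :: nil) ++ s) by (rewrite <- app_assoc; reflexivity).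
      apply IH. rewrite <- app_assoc. exact Hv.
Qed.

Lemma min_nat (P : nat -> Prop) : forall n, P n -> exists d, P d /\ (d <= n)%nat /\ forall k, P k -> (d <= k)%nat.
Proof.
  intro n. induction n as [n IH] using Wf_nat.lt_wf_ind. intro Hn.
  destruct (classic (exists m, (m < n)%nat /\ P m)) as [[m [Hm Pm]]|Hno].
  - destruct (IH m Hm Pm) as [d [Pd [Hd Hmin]]]. exists d; repeat split; auto; lia.
  - exists n. split; [auto|split;[lia|]]. intros k Pk.
    destruct (Compare_dec.le_lt_dec n k); auto. exfalso; apply Hno; eauto.
Qed.

Lemma exists_dist h u v n : tree_walk h u v n -> exists d, tree_dist h u v d /\ (d <= n)%nat.
Proof.
  intro H. destruct (min_nat (tree_walk h u v) n H) as [d [Pd [Hd Hm]]].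
  exists d. split; [split|]; auto.
Qed.

Lemma Rpower_pos x y : 0 < Rpower x y.
Proof. unfold Rpower. apply exp_pos. Qed.

Lemma Rpower_1_base y : Rpower 1 y = 1.
Proof. unfold Rpower. rewrite ln_1, Rmult_0_r, exp_0. reflexivity. Qed.

Lemma Rpower_le_self l p : 0 < l -> l <= 1 -> 1 < p -> Rpower l p <= l.
Proof.
  intros H0 H1 Hp. replace p with (1 + (p - 1)) by ring.
  rewrite Rpower_plus, Rpower_1 by auto.
  assert (Rpower l (p - 1) <= 1).
  { apply Rle_trans with (Rpower 1 (p - 1)); [apply Rle_Rpower_l; lra | rewrite Rpower_1_base; lra]. }
  nra.
Qed.

Lemma pow2_pos j : (1 <= 2 ^ j)%nat.
Proof. induction j; simpl; lia. Qed.

Lemma claim (Y : NormedSpace) (nrm : Y -> R) (h : nat) (f : list nat -> Y) (L bp c p : R) :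
  is_norm Y nrm ->
  (forall t, 0 < t -> t <= 2 -> beta_sup_le Y nrm t (1 - c * Rpower t p)) ->
  1 < p -> 0 < c -> 0 < L -> 0 < bp ->
  (forall u v n, tree_vertex h u -> tree_vertex h v -> tree_walk h u v n ->
     nrm (vsub (f u) (f v)) <= L * INR n) ->
  (forall u v m n0, tree_vertex h u -> tree_vertex h v -> tree_walk h u v n0 ->
     (forall n, tree_walk h u v n -> (m <= n)%nat) -> INR m <= bp * nrm (vsub (f u) (f v))) ->
  forall j a k, (length a + 2 ^ j <= h)%nat -> exists s, length s = (2 ^ j - 1)%nat /\
     nrm (vsub (f a) (f (a ++ k :: s))) <=
       (1 - INR j * (c * Rpower (2 / (bp * L)) p / 2)) * L * INR (2 ^ j).
Proof.
  intros Hn Hb Hp Hc HL Hbp Hlip Hcol.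
  set (eta := c * Rpower (2 / (bp * L)) p / 2).
  assert (Heta : 0 < eta) by (unfold eta; pose proof (Rpower_pos (2 / (bp * L)) p); nra).
  destruct Hn as [Hn0 [Hndef [Hnscal Hntri]]].
  induction j as [|j IHj]; intros a k Hlen.
  - exists nil. simpl in Hlen |- *. split; [reflexivity|].
    replace ((1 - 0 * eta) * L * 1) with (L * INR 1) by (simpl; ring).
    apply Hlip; unfold tree_vertex; try (rewrite length_app; simpl); try lia.
    apply (walk_down h (k :: nil) a). unfold tree_vertex; rewrite length_app; simpl; lia.
  - rewrite Nat.pow_succ_r' in Hlen |- *.
    set (K := (2 ^ j)%nat) in *.
    assert (HK : (1 <= K)%nat) by apply pow2_pos.
    set (lam := 1 - INR j * eta) in *.
    destruct (IHj a k) as [s1 [Hs1 Hb1]]; [lia|].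
    set (u := a ++ k :: s1) in *.
    assert (Hlu : length u = (length a + K)%nat).
    { unfold u; rewrite length_app; simpl; lia. }
    assert (Hch : forall n, exists s, length s = (K - 1)%nat /\
              nrm (vsub (f u) (f (u ++ n :: s))) <= lam * L * INR K).
    { intro n. apply IHj. lia. }
    pose (g := fun n => proj1_sig (constructive_indefinite_description _ (Hch n))).
    assert (Hg : forall n, length (g n) = (K - 1)%nat /\
              nrm (vsub (f u) (f (u ++ n :: g n))) <= lam * L * INR K).
    { intro n. exact (proj2_sig (constructive_indefinite_description _ (Hch n))). }
    set (v := fun n => u ++ n :: g n).
    assert (Hlv : forall n, length (v n) = (length a + 2 * K)%nat).
    { intro n. unfold v. rewrite length_app. simpl. rewrite (proj1 (Hg n)). lia. }
    assert (Hvu : tree_vertex h u) by (unfold tree_vertex; lia).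
    assert (Hvv : forall n, tree_vertex h (v n)) by (intro n; unfold tree_vertex; rewrite Hlv; lia).
    assert (Hwd : forall n, tree_walk h u (v n) K).
    { intro n. replace K with (length (n :: g n)) by (simpl; rewrite (proj1 (Hg n)); lia).
      apply walk_down. apply Hvv. }
    set (R0 := lam * L * INR K).
    set (x := vsub (f a) (f u)).
    set (y := fun n => vsub (f u) (f (v n))).
    assert (Hsep : forall m n, m <> n -> 2 * INR K <= bp * nrm (vsub (y m) (y n))).
    { intros m n Hmn. unfold y. rewrite I2.
      replace (2 * INR K) with (INR (2 * K)) by (rewrite mult_INR; simpl; ring).
      apply Hcol with (n0 := (K + K)%nat); auto.
      - apply walk_app with u. apply walk_sym, Hwd. apply Hwd.
      - intros N HN. apply walk_lower in HN. rewrite !Hlv in HN.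
        unfold v in HN. rewrite lcp_common, lcp_diff in HN by auto. lia. }
    assert (HyR : forall n, nrm (y n) <= R0) by (intro n; apply (Hg n)).
    assert (HxR : nrm x <= R0) by exact Hb1.
    assert (HKpos : 0 < INR K) by (apply lt_0_INR; lia).
    assert (HR0 : INR K <= bp * R0).
    { assert (H01 : 2 * INR K <= bp * nrm (vsub (y 0%nat) (y 1%nat))) by (apply Hsep; lia).
      assert (nrm (vsub (y 0%nat) (y 1%nat)) <= 2 * R0).
      { unfold vsub at 1. eapply Rle_trans. apply Hntri.
        rewrite nrm_opp by (repeat split; auto). pose proof (HyR 0%nat); pose proof (HyR 1%nat). lra. }
      nra. }
    assert (HR0p : 0 < R0).
    { apply Rmult_lt_reg_l with bp; auto. lra. }
    assert (Hlam : 0 < lam).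
    { unfold R0 in HR0p. destruct (Rle_lt_dec lam 0); auto.
      assert (lam * L <= 0) by nra. nra. }
    assert (Hlam1 : lam <= 1).
    { unfold lam. pose proof (pos_INR j). nra. }
    set (t := 2 * INR K / (bp * R0)).
    assert (Ht0 : 0 < t) by (unfold t; apply Rdiv_lt_0_compat; nra).
    assert (Ht2 : t <= 2).
    { unfold t. apply Rmult_le_reg_r with (bp * R0); [nra|].
      unfold Rdiv. rewrite Rmult_assoc, Rinv_l by nra. nra. }
    assert (Htl : t * lam = 2 / (bp * L)).
    { unfold t, R0. field. repeat split; lra. }
    assert (Hpw : Rpower (2 / (bp * L)) p <= lam * Rpower t p).
    { rewrite <- Htl, <- Rpower_mult_distr by auto.
      pose proof (Rpower_le_self lam p Hlam Hlam1 Hp). pose proof (Rpower_pos t p). nra. }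
    set (x' := vscal (/ R0) x).
    set (y' := fun n => vscal (/ R0) (y n)).
    assert (HRi : 0 < / R0) by (apply Rinv_0_lt_compat; auto).
    destruct (Hb t Ht0 Ht2 x' y') with (eps := eta) as [n Hnn]; auto.
    + unfold x'. rewrite Hnscal, Rabs_right by lra.
      apply Rmult_le_reg_l with R0; auto. rewrite <- Rmult_assoc, Rinv_r by lra. lra.
    + intro n. unfold y'. rewrite Hnscal, Rabs_right by lra.
      apply Rmult_le_reg_l with R0; auto. rewrite <- Rmult_assoc, Rinv_r by lra.
      pose proof (HyR n). lra.
    + intros m n Hmn. unfold y'. rewrite I3, Hnscal, Rabs_right by lra.
      pose proof (Hsep m n Hmn). unfold t.
      apply Rmult_le_reg_l with (bp * R0); [nra|].
      unfold Rdiv. field_simplify; [|lra|lra]. nra.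
    + exists (s1 ++ n :: g n). split.
      * rewrite length_app. simpl. rewrite (proj1 (Hg n)). lia.
      * replace (a ++ k :: s1 ++ n :: g n) with (v n)
          by (unfold v, u; rewrite <- app_assoc; reflexivity).
        unfold x', y' in Hnn. rewrite <- vscal_distr_v in Hnn.
        unfold x, y in Hnn. rewrite I1 in Hnn.
        rewrite Hnscal, Rabs_right in Hnn by lra.
        rewrite S_INR. fold lam. rewrite mult_INR.
        replace ((1 - (INR j + 1) * eta)) with (lam - eta) by (unfold lam; ring).
        assert (Hlt : nrm (vsub (f a) (f (v n))) < 2 * R0 * (1 - c * Rpower t p + eta)).
        { apply Rmult_lt_reg_l with (/ R0); auto.
          replace (/ R0 * (2 * R0 * (1 - c * Rpower t p + eta)))
            with (2 * (1 - c * Rpower t p + eta)) by (field; lra). lra. }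
        apply Rlt_le. eapply Rlt_le_trans; [exact Hlt|].
        unfold R0. simpl INR.
        assert (lam * (1 - c * Rpower t p + eta) <= lam - eta).
        { assert (c * Rpower (2 / (bp * L)) p = 2 * eta) by (unfold eta; field).
          assert (c * Rpower (2 / (bp * L)) p <= c * (lam * Rpower t p)) by nra.
          nra. }
        assert (0 < L * INR K) by nra.
        nra.
Qed.

Theorem theorem2 (p : R) (Y : NormedSpace) :
  1 < p -> is_Banach Y ->
  (exists nrm : Y -> R, equivalent_norm Y nrm /\ beta_power_type Y nrm p) ->
  exists C : R, 0 < C /\
    forall h : nat, (2 <= h)%nat ->
      tree_distortion_ge Y h (C * Rpower (ln (INR h)) (1 / p)).
Proof.
  intros Hp _ [nrm [[Hnorm [A [B [HA [HB Heq]]]]] [c [Hc Hbeta]]]].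
  set (M := (2 / c + 1) * ln 2).
  assert (Hln2 : 0 < ln 2) by (pose proof ln_lt_2; lra).
  assert (HM : 0 < M) by (unfold M; assert (0 < 2 / c) by (apply Rdiv_lt_0_compat; lra); nra).
  set (RM := Rpower M (1 / p)).
  assert (HRM : 0 < RM) by apply Rpower_pos.
  exists (A / (B * RM)). split; [apply Rdiv_lt_0_compat; nra|].
  intros h Hh f Hinj a b Ha Hb Hlip Hcol.
  set (L := B * a). set (bp := b / A).
  assert (Hlip' : forall u v n, tree_vertex h u -> tree_vertex h v -> tree_walk h u v n ->
     nrm (vsub (f u) (f v)) <= L * INR n).
  { intros u v n Hu Hv Hw. destruct (exists_dist h u v n Hw) as [d [Hd Hdn]].
    pose proof (Hlip u v d Hu Hv Hd). apply le_INR in Hdn.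
    destruct (Heq (vsub (f u) (f v))). unfold L.
    assert (a * INR d <= a * INR n) by (apply Rmult_le_compat_l; lra).
    assert (B * vnorm (vsub (f u) (f v)) <= B * (a * INR n)) by (apply Rmult_le_compat_l; lra).
    lra. }
  assert (Hcol' : forall u v m n0, tree_vertex h u -> tree_vertex h v -> tree_walk h u v n0 ->
     (forall n, tree_walk h u v n -> (m <= n)%nat) -> INR m <= bp * nrm (vsub (f u) (f v))).
  { intros u v m n0 Hu Hv Hw Hm. destruct (exists_dist h u v n0 Hw) as [d [Hd Hdn]].
    pose proof (Hcol u v d Hu Hv Hd). assert (Hmd := Hm d (proj1 Hd)). apply le_INR in Hmd.
    destruct (Heq (vsub (f u) (f v))). unfold bp.
    assert (b * vnorm (vsub (f u) (f v)) <= b / A * nrm (vsub (f u) (f v))).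
    { unfold Rdiv. apply Rmult_le_reg_l with A; auto.
      replace (A * (b * / A * nrm (vsub (f u) (f v)))) with (b * nrm (vsub (f u) (f v)))
        by (field; lra). nra. }
    lra. }
  assert (Hv0 : tree_vertex h nil) by (unfold tree_vertex; simpl; lia).
  assert (Hv1 : tree_vertex h (0%nat :: nil)) by (unfold tree_vertex; simpl; lia).
  assert (Hw01 : tree_walk h nil (0%nat :: nil) 1) by (apply (walk_down h (0%nat :: nil) nil); auto).
  assert (HD1 : 1 <= bp * L).
  { pose proof (Hlip' _ _ _ Hv0 Hv1 Hw01).
    assert (INR 1 <= bp * nrm (vsub (f nil) (f (0%nat :: nil)))).
    { apply Hcol' with 1%nat; auto. intros n Hn. apply walk_lower in Hn. simpl in Hn. lia. }
    simpl in *. assert (0 <= bp) by (unfold bp; apply Rmult_le_pos; [lra | apply Rlt_le, Rinv_0_lt_compat; lra]). nra. }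
  assert (HL : 0 < L) by (unfold L, bp in *; destruct (Rle_lt_dec L 0); [|auto];
     assert (0 <= b/A) by (apply Rmult_le_pos; [lra | apply Rlt_le, Rinv_0_lt_compat; lra]); unfold L in *; nra).
  assert (Hbp : 0 < bp) by (assert (0 <= bp) by (unfold bp; apply Rmult_le_pos; [lra | apply Rlt_le, Rinv_0_lt_compat; lra]); nra).
  set (D := bp * L) in *.
  set (j := Nat.log2 h).
  destruct (Nat.log2_spec h) as [Hj1 Hj2]; [lia|]. fold j in Hj1, Hj2.
  destruct (claim Y nrm h f L bp c p Hnorm Hbeta Hp Hc HL Hbp Hlip' Hcol' j nil 0%nat)
    as [s [Hs Hbd]]; [simpl; lia|].
  fold D in Hbd. set (eta := c * Rpower (2 / D) p / 2) in *.
  simpl app in Hbd.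
  assert (HK : 0 < INR (2 ^ j)) by (apply lt_0_INR; pose proof (pow2_pos j); lia).
  assert (Hvs : tree_vertex h (0%nat :: s)) by (unfold tree_vertex; simpl; lia).
  assert (Hc2 : INR (2 ^ j) <= bp * nrm (vsub (f nil) (f (0%nat :: s)))).
  { apply Hcol' with (length (0%nat :: s)); auto.
    - apply (walk_down h (0%nat :: s) nil); auto.
    - intros n Hn. apply walk_lower in Hn. simpl in *. lia. }
  assert (Hlam : 1 <= (1 - INR j * eta) * D).
  { unfold D. assert (INR (2^j) <= bp * ((1 - INR j * eta) * L * INR (2 ^ j))) by nra.
    apply Rmult_le_reg_r with (INR (2^j)); auto. nra. }
  set (P := Rpower D p).
  assert (HP1 : 1 <= P).
  { unfold P. rewrite <- (Rpower_1_base p). apply Rle_Rpower_l; lra. }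
  assert (Heta : / P <= 2 * eta / c).
  { unfold eta. replace (2 * (c * Rpower (2 / D) p / 2) / c) with (Rpower (2 / D) p) by (field; lra).
    assert (Hinv : Rpower (1 / D) p * P = 1).
    { unfold P. rewrite Rpower_mult_distr by (try apply Rdiv_lt_0_compat; lra).
      replace (1 / D * D) with 1 by (field; lra). apply Rpower_1_base. }
    assert (Rpower (1 / D) p <= Rpower (2 / D) p).
    { apply Rle_Rpower_l; [lra|]. split; [apply Rdiv_lt_0_compat; lra|].
      unfold Rdiv. assert (0 < / D) by (apply Rinv_0_lt_compat; lra). nra. }
    replace (/ P) with (Rpower (1 / D) p); [lra|].
    apply Rmult_eq_reg_r with P; [|lra]. rewrite Hinv, Rinv_l; lra. }
  assert (Hjb : INR j < 2 * P / c).
  { assert (0 < INR j * eta -> INR j < 2 * P / c).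
    { intro. assert (INR j * eta < 1) by nra.
      assert (INR j * (/ P) < 2 / c).
      { pose proof (pos_INR j). assert (INR j * / P <= INR j * (2 * eta / c)) by nra.
        replace (INR j * (2 * eta / c)) with (2 * (INR j * eta) / c) in H2 by (field; lra).
        assert (2 * (INR j * eta) / c < 2 / c).
        { unfold Rdiv. assert (0 < / c) by (apply Rinv_0_lt_compat; lra). nra. }
        lra. }
      assert (0 < P) by lra.
      replace (2 * P / c) with (2 / c * P) by (field; lra).
      replace (INR j) with (INR j * / P * P) by (field; lra). nra. }
    destruct (Rle_lt_dec (INR j * eta) 0); [|auto].
    assert (0 < 2 * P / c) by (apply Rdiv_lt_0_compat; lra).
    assert (Heta0 : 0 < eta) by (unfold eta; pose proof (Rpower_pos (2 / D) p); nra).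
    pose proof (pos_INR j). assert (INR j = 0) by nra. lra. }
  assert (Hh0 : 2 <= INR h) by (replace 2 with (INR 2) by (simpl; ring); apply le_INR; lia).
  assert (Hlnh : 0 < ln (INR h)).
  { rewrite <- ln_1. apply ln_increasing; lra. }
  assert (Hlnb : ln (INR h) < M * P).
  { assert (ln (INR h) < INR (S j) * ln 2).
    { rewrite <- ln_pow by lra. apply ln_increasing; [lra|].
      apply Rlt_le_trans with (INR (2 ^ S j)). apply lt_INR; exact Hj2.
      rewrite pow_INR. replace (INR 2) with 2 by (simpl; ring). lra. }
    rewrite S_INR in H. unfold M.
    assert ((INR j + 1) * ln 2 <= (2 / c + 1) * ln 2 * P).
    { assert (INR j + 1 <= (2 / c + 1) * P).
      { replace (2 * P / c) with (2 / c * P) in Hjb by (field; lra). nra. }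
      nra. }
    lra. }
  assert (Hpow : Rpower (ln (INR h)) (1 / p) <= RM * D).
  { apply Rle_trans with (Rpower (M * P) (1 / p)).
    - apply Rle_Rpower_l. apply Rlt_le, Rdiv_lt_0_compat; lra. lra.
    - rewrite <- Rpower_mult_distr by (auto; unfold P; apply Rpower_pos).
      unfold P. rewrite Rpower_mult. replace (p * (1 / p)) with 1 by (field; lra).
      rewrite Rpower_1 by lra. fold RM. lra. }
  assert (Hfin : A / (B * RM) * (RM * D) = a * b).
  { unfold D, bp, L. field. repeat split; lra. }
  rewrite <- Hfin. apply Rmult_le_compat_l; auto.
  apply Rlt_le, Rdiv_lt_0_compat; nra.
Qed.
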